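(* Let $(G,k)$ be an instance of \textsc{Bicolored $P_3$ Deletion} such that $G$ is nice, and let $p$ be the number of bicolored $P_3$s in $G$. Then for every two edges $e_1,e_2$ forming a bicolored $P_3$ in $G$ there is an edge $e\in\{e_1,e_2\}$ such that (a) $G-e$ contains exactly $p-1$ bicolored $P_3$s, and (b) $G-e$ is nice.
   Context: A two-colored graph $G=(V,E_r,E_b)$ is a finite simple undirected graph whose edge set $E=E_r\uplus E_b$ is partitioned into red and blue edges. A bicolored $P_3$ is an induced subgraph on three vertices $u,v,w$ with edges $\{u,v\},\{v,w\}$ of different colors and $\{u,w\}\notin E$; these two edges form the bicolored $P_3$. The following induced subgraphs are defined up to swapping the two colors (both versions count). An LC-Diamond on $u,v,w,z$: edges exactly $\{u,v\}$ blue, $\{v,w\}$ red, $\{u,z\}$ blue, $\{v,z\}$ red, $\{w,z\}$ blue. An LO-Diamond on $u,v,w,z$: edges exactly $\{u,v\}$ blue, $\{v,w\}$ red, $\{u,z\}$ blue, $\{v,z\}$ blue, $\{w,z\}$ red. An IIZ-Diamond on $u,v,w,z$: edges exactly $\{u,v\}$ blue, $\{v,w\}$ red, $\{u,z\}$ red, $\{v,z\}$ blue, $\{w,z\}$ blue. A CC-Hourglass on $u,v,w,z_1,z_2$: edges exactly $\{u,v\}$ blue, $\{v,w\}$ red, $\{u,z_1\}$ blue, $\{v,z_1\}$ red, $\{v,z_2\}$ blue, $\{w,z_2\}$ red. A two-colored graph is nice if it contains none of LC-Diamond, LO-Diamond, IIZ-Diamond, CC-Hourglass as an induced subgraph and every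 edge forms a bicolored $P_3$ with at most one other edge. \textsc{Bicolored $P_3$ Deletion}: given $G$ and $k\in\mathbb{N}$, decide whether some $S\subseteq E$ with $|S|\le k$ makes $G-S$ free of induced bicolored $P_3$s. *)

(* Defs.v *)
From mathcomp Require Import all_boot.
Set Implicit Arguments. Unset Strict Implicit. Unset Printing Implicit Defensive.

(* A two-colored graph on a finite vertex type V is given by a colouring
   function col : V -> V -> option bool:  col x y = None  means {x,y} is not
   an edge; Some true = red edge, Some false = blue edge. *)
Definition tcg (V : finType) (col : V -> V -> option bool) : Prop :=
  (forall x y, col x y = col y x) /\ (forall x, col x x = None).

Section TwoColored.
Variable V : finType.
Variable col : V -> V -> option bool.

Definition is_edge (e : {set V}) : bool :=
  [exists x, exists y, (e == [set x; y]) && (col x y != None)].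

Definition bp3 (e1 e2 : {set V}) : bool :=
  [exists u, exists v, exists w, exists c : bool,
     [&& e1 == [set u; v], e2 == [set v; w], u != w,
         col u v == Some c, col v w == Some (~~ c) & col u w == None]].

Definition nbp3 : nat :=
  #|[set E : {set {set V}} | [exists e1, exists e2, (E == [set e1; e2]) && bp3 e1 e2]]|.

(* Forbidden induced subgraphs; c plays the role of "blue" (so ~~ c is "red"),
   quantifying over c covers both colour versions. *)
Definition has_LC_diamond : bool :=
  [exists u, exists v, exists w, exists z, exists c : bool,
     [&& uniq [:: u; v; w; z],
         col u v == Some c, col v w == Some (~~ c), col u z == Some c,
         col v z == Some (~~ c), col w z == Some c & col u w == None]].

Definition has_LO_diamond : bool :=
  [exists u, exists v, exists w, exists z, exists c : bool,
     [&& uniq [:: u; v; w; z],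
         col u v == Some c, col v w == Some (~~ c), col u z == Some c,
         col v z == Some c, col w z == Some (~~ c) & col u w == None]].

Definition has_IIZ_diamond : bool :=
  [exists u, exists v, exists w, exists z, exists c : bool,
     [&& uniq [:: u; v; w; z],
         col u v == Some c, col v w == Some (~~ c), col u z == Some (~~ c),
         col v z == Some c, col w z == Some c & col u w == None]].

Definition has_CC_hourglass : bool :=
  [exists u, exists v, exists w, exists z1, exists z2, exists c : bool,
     [&& uniq [:: u; v; w; z1; z2],
         col u v == Some c, col v w == Some (~~ c), col u z1 == Some c,
         col v z1 == Some (~~ c), col v z2 == Some c, col w z2 == Some (~~ c),
         col u w == None, col u z2 == None, col w z1 == None
       & col z1 z2 == None]].

Definition nice : Prop :=
  ~~ has_LC_diamond /\ ~~ has_LO_diamond /\ ~~ has_IIZ_diamond /\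
  ~~ has_CC_hourglass /\
  (forall e, is_edge e -> #|[set e' | bp3 e e' || bp3 e' e]| <= 1).

End TwoColored.

Definition del_edge (V : finType) (col : V -> V -> option bool) (e : {set V})
  : V -> V -> option bool :=
  fun x y => if [set x; y] == e then None else col x y.

(* Main.v *)
Require Import Defs.
From mathcomp Require Import all_boot.
From Stdlib Require Import Classical.
Set Implicit Arguments. Unset Strict Implicit. Unset Printing Implicit Defensive.

Lemma set2_eq (T : finType) (x y u v : T) :
  [set x; y] = [set u; v] -> (x = u /\ y = v) \/ (x = v /\ y = u).
Proof.
move=> E.
have hx : x \in [set u; v] by rewrite -E !inE eqxx.
have hy : y \in [set u; v] by rewrite -E !inE eqxx orbT.
have hu : u \in [set x; y] by rewrite E !inE eqxx.
have hv : v \in [set x; y] by rewrite E !inE eqxx orbT.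
move: hx hy hu hv; rewrite !inE.
by case/orP=>/eqP hx; case/orP=>/eqP hy; case/orP=>/eqP hu; case/orP=>/eqP hv; subst; auto.
Qed.

Lemma le1_eq (T : finType) (A : {set T}) a b : #|A| <= 1 -> a \in A -> b \in A -> a = b.
Proof. move/card_le1_eqP => H ha hb. exact: H. Qed.

Definition goodE (V : finType) (col : V -> V -> option bool) (e : {set V}) :=
  forall x y z d, [set x; y] = e -> col x z = Some d -> col y z = Some (~~ d) -> False.
Definition goodp (V : finType) (col : V -> V -> option bool) (a b : V) :=
  forall z d, col a z = Some d -> col b z = Some (~~ d) -> False.

Ltac ct Hs := rewrite ?negbK; first [assumption | rewrite Hs; assumption].

Lemma edge_neq (V : finType) (col : V -> V -> option bool) x y d :
  tcg col -> col x y = Some d -> x != y.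
Proof. case=> _ Hl H; apply/eqP=> E; subst; by rewrite Hl in H. Qed.

Lemma p3_neq (V : finType) (col : V -> V -> option bool) u v w c :
  tcg col -> col u v = Some c -> col v w = Some (~~ c) -> u != w.
Proof.
case=> Hs _ H1 H2; apply/eqP=> E; subst w; rewrite Hs H1 in H2.
by case: c H1 H2 => H1 [] .
Qed.

Lemma nn_neq (V : finType) (col : V -> V -> option bool) a b c d :
  col a b = Some d -> col a c = None -> b != c.
Proof. move=> H1 H2; apply/eqP=> E; rewrite E in H1; congruence. Qed.

Lemma LC_I (V : finType) (col : V -> V -> option bool) u v w z c : tcg col ->
  col u v = Some c -> col v w = Some (~~c) -> col u z = Some c ->
  col v z = Some (~~c) -> col w z = Some c -> col u w = None -> has_LC_diamond col.
Proof.
move=> T H1 H2 H3 H4 H5 H6.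
have a1 := edge_neq T H1. have a2 := p3_neq T H1 H2. have a3 := edge_neq T H3.
have a4 := edge_neq T H2. have a5 := edge_neq T H4. have a6 := edge_neq T H5.
apply/existsP; exists u; apply/existsP; exists v; apply/existsP; exists w;
apply/existsP; exists z; apply/existsP; exists c.
by rewrite /= !inE (negbTE a1) (negbTE a2) (negbTE a3) (negbTE a4) (negbTE a5) (negbTE a6)
  H1 H2 H3 H4 H5 H6 !eqxx.
Qed.

Lemma LO_I (V : finType) (col : V -> V -> option bool) u v w z c : tcg col ->
  col u v = Some c -> col v w = Some (~~c) -> col u z = Some c ->
  col v z = Some c -> col w z = Some (~~c) -> col u w = None -> has_LO_diamond col.
Proof.
move=> T H1 H2 H3 H4 H5 H6.
have a1 := edge_neq T H1. have a2 := p3_neq T H1 H2. have a3 := edge_neq T H3.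
have a4 := edge_neq T H2. have a5 := edge_neq T H4. have a6 := edge_neq T H5.
apply/existsP; exists u; apply/existsP; exists v; apply/existsP; exists w;
apply/existsP; exists z; apply/existsP; exists c.
by rewrite /= !inE (negbTE a1) (negbTE a2) (negbTE a3) (negbTE a4) (negbTE a5) (negbTE a6)
  H1 H2 H3 H4 H5 H6 !eqxx.
Qed.

Lemma IIZ_I (V : finType) (col : V -> V -> option bool) u v w z c : tcg col ->
  col u v = Some c -> col v w = Some (~~c) -> col u z = Some (~~c) ->
  col v z = Some c -> col w z = Some c -> col u w = None -> has_IIZ_diamond col.
Proof.
move=> T H1 H2 H3 H4 H5 H6.
have a1 := edge_neq T H1. have a2 := p3_neq T H1 H2. have a3 := edge_neq T H3.
have a4 := edge_neq T H2. have a5 := edge_neq T H4. have a6 := edge_neq T H5.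
apply/existsP; exists u; apply/existsP; exists v; apply/existsP; exists w;
apply/existsP; exists z; apply/existsP; exists c.
by rewrite /= !inE (negbTE a1) (negbTE a2) (negbTE a3) (negbTE a4) (negbTE a5) (negbTE a6)
  H1 H2 H3 H4 H5 H6 !eqxx.
Qed.

Lemma CC_I (V : finType) (col : V -> V -> option bool) u v w z1 z2 c : tcg col ->
  col u v = Some c -> col v w = Some (~~c) -> col u z1 = Some c ->
  col v z1 = Some (~~c) -> col v z2 = Some c -> col w z2 = Some (~~c) ->
  col u w = None -> col u z2 = None -> col w z1 = None -> col z1 z2 = None ->
  has_CC_hourglass col.
Proof.
move=> T H1 H2 H3 H4 H5 H6 H7 H8 H9 H10.
have T' := T; case: T' => Hs Hl.
have a1 := edge_neq T H1. have a2 := p3_neq T H1 H2. have a3 := edge_neq T H3.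
have a4 : u != z2.
  apply/eqP=> E; subst z2; by rewrite Hs H7 in H6.
have a5 := edge_neq T H2. have a6 := edge_neq T H4. have a7 := edge_neq T H5.
have a8 : w != z1 by rewrite eq_sym; apply: nn_neq H3 H7.
have a9 := edge_neq T H6. have a10 : z1 != z2 by apply: nn_neq H3 H8.
apply/existsP; exists u; apply/existsP; exists v; apply/existsP; exists w;
apply/existsP; exists z1; apply/existsP; exists z2; apply/existsP; exists c.
by rewrite /= !inE (negbTE a1) (negbTE a2) (negbTE a3) (negbTE a4) (negbTE a5) (negbTE a6)
  (negbTE a7) (negbTE a8) (negbTE a9) (negbTE a10)
  H1 H2 H3 H4 H5 H6 H7 H8 H9 H10 !eqxx.
Qed.

Lemma bp3_I (V : finType) (col : V -> V -> option bool) u v w c :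
  u != w -> col u v = Some c -> col v w = Some (~~c) -> col u w = None ->
  bp3 col [set u; v] [set v; w].
Proof.
move=> a H1 H2 H3.
apply/existsP; exists u; apply/existsP; exists v; apply/existsP; exists w;
apply/existsP; exists c. by rewrite a H1 H2 H3 !eqxx.
Qed.

Lemma edge_I (V : finType) (col : V -> V -> option bool) x y d :
  col x y = Some d -> is_edge col [set x; y].
Proof. move=> H; apply/existsP; exists x; apply/existsP; exists y; by rewrite eqxx H. Qed.

Lemma bp3_edges (V : finType) (col : V -> V -> option bool) a b :
  bp3 col a b -> is_edge col a /\ is_edge col b.
Proof.
case/existsP=> u /existsP[v /existsP[w /existsP[c]]].
case/and5P=> /eqP-> /eqP-> _ /eqP H1 /andP[/eqP H2 _].
split; [exact: edge_I H1 | exact: edge_I H2].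
Qed.

Lemma two_p3 (V : finType) (col : V -> V -> option bool) (f a b : {set V}) :
  nice col -> is_edge col f -> (bp3 col f a || bp3 col a f) ->
  (bp3 col f b || bp3 col b f) -> a = b.
Proof.
case=> _ [_ [_ [_ H]]] Hf ha hb.
apply: (le1_eq (H f Hf)); by rewrite inE.
Qed.

Lemma del_some (V : finType) (col : V -> V -> option bool) e (x y : V) d :
  del_edge col e x y = Some d -> col x y = Some d.
Proof. rewrite /del_edge; by case: ifP. Qed.

Lemma del_none (V : finType) (col : V -> V -> option bool) e (x y z : V) d :
  goodE col e -> col x z = Some d -> col y z = Some (~~d) ->
  del_edge col e x y = None -> col x y = None.
Proof.
move=> G h1 h2; rewrite /del_edge; case: ifP => // /eqP E _.
by case: (G x y z d E h1 h2).
Qed.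

Lemma LC_del (V : finType) (col : V -> V -> option bool) e :
  tcg col -> goodE col e -> has_LC_diamond (del_edge col e) -> has_LC_diamond col.
Proof.
move=> T G /existsP[u /existsP[v /existsP[w /existsP[z /existsP[c
  /andP[_ /andP[/eqP/del_some h1 /andP[/eqP/del_some h2 /andP[/eqP/del_some h3
  /andP[/eqP/del_some h4 /andP[/eqP/del_some h5 /eqP h6]]]]]]]]]]].
have T' := T; case: T' => Hs _.
apply: (LC_I T h1 h2 h3 h4 h5).
by apply: (del_none G h1 _ h6); rewrite Hs.
Qed.

Lemma LO_del (V : finType) (col : V -> V -> option bool) e :
  tcg col -> goodE col e -> has_LO_diamond (del_edge col e) -> has_LO_diamond col.
Proof.
move=> T G /existsP[u /existsP[v /existsP[w /existsP[z /existsP[c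
  /andP[_ /andP[/eqP/del_some h1 /andP[/eqP/del_some h2 /andP[/eqP/del_some h3
  /andP[/eqP/del_some h4 /andP[/eqP/del_some h5 /eqP h6]]]]]]]]]]].
have T' := T; case: T' => Hs _.
apply: (LO_I T h1 h2 h3 h4 h5).
by apply: (del_none G h1 _ h6); rewrite Hs.
Qed.

Lemma IIZ_del (V : finType) (col : V -> V -> option bool) e :
  tcg col -> goodE col e -> has_IIZ_diamond (del_edge col e) -> has_IIZ_diamond col.
Proof.
move=> T G /existsP[u /existsP[v /existsP[w /existsP[z /existsP[c
  /andP[_ /andP[/eqP/del_some h1 /andP[/eqP/del_some h2 /andP[/eqP/del_some h3
  /andP[/eqP/del_some h4 /andP[/eqP/del_some h5 /eqP h6]]]]]]]]]]].
have T' := T; case: T' => Hs _.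
apply: (IIZ_I T h1 h2 h3 h4 h5).
by apply: (del_none G h1 _ h6); rewrite Hs.
Qed.

Lemma CC_del (V : finType) (col : V -> V -> option bool) e :
  tcg col -> ~~ has_LO_diamond col -> ~~ has_IIZ_diamond col -> goodE col e ->
  has_CC_hourglass (del_edge col e) -> has_CC_hourglass col.
Proof.
move=> T nLO nIIZ G /existsP[u /existsP[v /existsP[w /existsP[z1 /existsP[z2 /existsP[c
  /andP[_ /andP[/eqP/del_some h1 /andP[/eqP/del_some h2 /andP[/eqP/del_some h3
  /andP[/eqP/del_some h4 /andP[/eqP/del_some h5 /andP[/eqP/del_some h6
  /andP[/eqP h7 /andP[/eqP _ /andP[/eqP _ /eqP h10]]]]]]]]]]]]]]]].
have T' := T; case: T' => Hs _.
have k7 : col u w = None by apply: (del_none G h1 _ h7); rewrite Hs.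
have k10 : col z1 z2 = None.
  by apply: (del_none (z := v) (d := ~~ c) G _ _ h10); rewrite Hs ?negbK.
case k8: (col u z2) => [d|].
  exfalso; have [Ed|Ed] : d = c \/ d = ~~ c by case: c {h1 h2 h3 h4 h5 h6}; case: d {k8}; auto.
    subst d; move/negP: nLO; apply; apply: (@LO_I _ _ u v w z2 c T); ct Hs.
  subst d; move/negP: nIIZ; apply; apply: (@IIZ_I _ _ z2 v z1 u c T); ct Hs.
case k9: (col w z1) => [d|].
  exfalso; have [Ed|Ed] : d = c \/ d = ~~ c by case: c {h1 h2 h3 h4 h5 h6}; case: d {k9}; auto.
    subst d; move/negP: nIIZ; apply; apply: (@IIZ_I _ _ z1 v z2 w (~~ c) T); ct Hs.
  subst d; move/negP: nLO; apply; apply: (@LO_I _ _ w v u z1 (~~ c) T); ct Hs.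
exact: (CC_I T h1 h2 h3 h4 h5 h6 k7 k8 k9 k10).
Qed.

Lemma bool_cases (d c : bool) : d = c \/ d = ~~ c.
Proof. by case: c; case: d; auto. Qed.

Lemma choice_p (V : finType) (col : V -> V -> option bool) (u v w : V) c :
  tcg col -> nice col -> col u v = Some c -> col v w = Some (~~c) -> col u w = None ->
  goodp col u v \/ goodp col v w.
Proof.
move=> T N Huv Hvw Huw.
have T' := T; case: T' => Hs Hl.
have N' := N; case: N' => nLC [nLO [nIIZ [nCC _]]].
have Huw' := p3_neq T Huv Hvw.
case: (classic (goodp col u v)) => [|Gu]; [by left|right].
move=> y d' Hvy Hwy.
apply: Gu => x d Hux Hvx.
have [Hux' [Hvx' Hwx]] : col u x = Some c /\ col v x = Some (~~c) /\ col w x = None.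
  case Hwx: (col w x) => [e|].
    exfalso; case: (bool_cases d c) => Ed; subst d; rewrite ?negbK in Hvx;
      case: (bool_cases e c) => Ee; subst e.
    - by move/negP: nLC; apply; apply: (@LC_I _ _ u v w x c T); ct Hs.
    - by move/negP: nLO; apply; apply: (@LO_I _ _ w v u x (~~c) T); ct Hs.
    - by move/negP: nIIZ; apply; apply: (@IIZ_I _ _ u v w x c T); ct Hs.
    - by move/negP: nLC; apply; apply: (@LC_I _ _ w v u x (~~c) T); ct Hs.
  case: (bool_cases d c) => Ed; subst d; first by [].
  exfalso; rewrite negbK in Hvx.
  have xw : x != w by apply: nn_neq Hux Huw.
  have b1 : bp3 col [set x; v] [set v; w] by apply: (@bp3_I _ col x v w c xw); ct Hs.
  have b2 : bp3 col [set u; v] [set v; w] := @bp3_I _ col u v w c Huw' Huv Hvw Huw.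
  have E := two_p3 N (edge_I Hvw) (introT orP (or_intror b1)) (introT orP (or_intror b2)).
  have : x \in [set u; v] by rewrite -E !inE eqxx.
  rewrite !inE => /orP[]/eqP Ex; subst x; [by rewrite Hl in Hux | by rewrite Hl in Hvx].
have [Hvy' [Hwy' Huy]] : col v y = Some c /\ col w y = Some (~~c) /\ col u y = None.
  case Huy: (col u y) => [e|].
    exfalso; case: (bool_cases d' c) => Ed; subst d'; rewrite ?negbK in Hwy;
      case: (bool_cases e c) => Ee; subst e.
    - by move/negP: nLO; apply; apply: (@LO_I _ _ u v w y c T); ct Hs.
    - by move/negP: nLC; apply; apply: (@LC_I _ _ w v u y (~~c) T); ct Hs.
    - by move/negP: nLC; apply; apply: (@LC_I _ _ u v w y c T); ct Hs.
    - by move/negP: nIIZ; apply; apply: (@IIZ_I _ _ w v u y (~~c) T); ct Hs.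
  case: (bool_cases d' c) => Ed; subst d'; first by [].
  exfalso; rewrite negbK in Hwy.
  have yu' : y != u.
    apply/eqP=> E; subst y; by rewrite Hs Huw in Hwy.
  have b1 : bp3 col [set y; v] [set v; u].
    by apply: (@bp3_I _ col y v u (~~ c) yu'); ct Hs.
  have b2 : bp3 col [set u; v] [set v; w] := @bp3_I _ col u v w c Huw' Huv Hvw Huw.
  rewrite [[set v; u]]setUC in b1.
  have E := two_p3 N (edge_I Huv) (introT orP (or_introl b2)) (introT orP (or_intror b1)).
  have : w \in [set y; v] by rewrite -E !inE eqxx orbT.
  rewrite !inE => /orP[]/eqP Ex; subst w; [by rewrite Hl in Hwy | by rewrite Hl in Hvw].
case Hxy: (col x y) => [e|].
  case: (bool_cases e c) => Ee; subst e.
  - by move/negP: nLC; apply; apply: (@LC_I _ _ w y x v (~~c) T); ct Hs.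
  - by move/negP: nLC; apply; apply: (@LC_I _ _ u x y v c T); ct Hs.
by move/negP: nCC; apply; apply: (@CC_I _ _ u v w x y c T); ct Hs.
Qed.

Lemma goodp_E (V : finType) (col : V -> V -> option bool) u v :
  goodp col u v -> goodE col [set u; v].
Proof.
move=> Gp x y z d E h1 h2.
case: (set2_eq E) => [[ex ey]|[ex ey]]; subst x y.
  exact: Gp h1 h2.
by apply: (Gp z (~~ d) h2); rewrite negbK.
Qed.

Lemma bp3_del (V : finType) (col : V -> V -> option bool) e a b :
  tcg col -> goodE col e -> bp3 (del_edge col e) a b -> bp3 col a b.
Proof.
move=> T G /existsP[u /existsP[v /existsP[w /existsP[c /and5P[/eqP-> /eqP-> uw
  /eqP/del_some h1 /andP[/eqP/del_some h2 /eqP h3]]]]]].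
have T' := T; case: T' => Hs _.
apply: (@bp3_I _ col u v w c uw h1 h2).
by apply: (del_none G h1 _ h3); rewrite Hs.
Qed.

Lemma bp3_del_neq (V : finType) (col : V -> V -> option bool) e a b :
  bp3 (del_edge col e) a b -> a != e /\ b != e.
Proof.
move=> /existsP[u /existsP[v /existsP[w /existsP[c /and5P[/eqP-> /eqP-> _
  h1 /andP[h2 _]]]]]].
by split; apply/eqP => E; [move: h1 | move: h2]; rewrite /del_edge E eqxx.
Qed.

Lemma bp3_keep (V : finType) (col : V -> V -> option bool) e a b :
  bp3 col a b -> a != e -> b != e -> bp3 (del_edge col e) a b.
Proof.
move=> /existsP[u /existsP[v /existsP[w /existsP[c /and5P[/eqP Ea /eqP Eb uw
  /eqP h1 /andP[/eqP h2 /eqP h3]]]]]] na nb.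
rewrite Ea Eb; apply: (@bp3_I _ _ u v w c uw).
- by rewrite /del_edge -Ea (negbTE na).
- by rewrite /del_edge -Eb (negbTE nb).
- by rewrite /del_edge h3; case: ifP.
Qed.

Lemma share (V : finType) (col : V -> V -> option bool) e1 e2 a b e :
  nice col -> bp3 col e1 e2 -> bp3 col a b -> (e = e1 \/ e = e2) -> (e = a \/ e = b) ->
  [set a; b] = [set e1; e2].
Proof.
move=> N h12 hab He1 He2.
have [E1 E2] := bp3_edges h12.
case: He1 => Ee1; case: He2 => Ee; subst e.
- subst a.
  by rewrite (two_p3 N E1 (introT orP (or_introl hab)) (introT orP (or_introl h12))).
- subst b.
  by rewrite (two_p3 N E1 (introT orP (or_intror hab)) (introT orP (or_introl h12))) setUC.
- subst a.
  by rewrite (two_p3 N E2 (introT orP (or_introl hab)) (introT orP (or_intror h12))) setUC.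
- subst b.
  by rewrite (two_p3 N E2 (introT orP (or_intror hab)) (introT orP (or_intror h12))).
Qed.

Definition P3set (V : finType) (col : V -> V -> option bool) :=
  [set E : {set {set V}} | [exists e1, exists e2, (E == [set e1; e2]) && bp3 col e1 e2]].

Lemma nbp3E (V : finType) (col : V -> V -> option bool) : nbp3 col = #|P3set col|.
Proof. by []. Qed.

Lemma main_e (V : finType) (col : V -> V -> option bool) (e1 e2 e : {set V}) :
  tcg col -> nice col -> bp3 col e1 e2 -> (e = e1 \/ e = e2) -> goodE col e ->
  nbp3 (del_edge col e) = nbp3 col - 1 /\ nice (del_edge col e).
Proof.
move=> T N h12 He G.
have N' := N; case: N' => nLC [nLO [nIIZ [nCC Hdeg]]].
split.
  rewrite !nbp3E.
  have -> : P3set (del_edge col e) = P3set col :\ [set e1; e2].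
    apply/setP => E; rewrite !inE.
    apply/idP/idP.
    - case/existsP=> a /existsP[b /andP[/eqP EE hab]].
      have [na nb] := bp3_del_neq hab.
      apply/andP; split.
        apply/eqP => EE'.
        have : e \in [set e1; e2] by case: He => ->; rewrite !inE eqxx ?orbT.
        rewrite -EE' EE !inE => /orP[]/eqP Ee; [by rewrite Ee eqxx in na | by rewrite Ee eqxx in nb].
      apply/existsP; exists a; apply/existsP; exists b; by rewrite EE eqxx (bp3_del T G hab).
    - case/andP=> nE /existsP[a /existsP[b /andP[/eqP EE hab]]].
      apply/existsP; exists a; apply/existsP; exists b; rewrite EE eqxx /=.
      refine (bp3_keep hab _ _).
      + apply/eqP=> Ea.
        by move: nE; rewrite EE (share N h12 hab He (or_introl (esym Ea))) eqxx.
      + apply/eqP=> Eb.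
        by move: nE; rewrite EE (share N h12 hab He (or_intror (esym Eb))) eqxx.
  have Hin : [set e1; e2] \in P3set col.
    rewrite inE; apply/existsP; exists e1; apply/existsP; exists e2; by rewrite eqxx h12.
  by rewrite [in RHS](cardsD1 [set e1; e2]) Hin add1n subn1.
split; [apply/negP => H; move/negP: nLC; apply; exact: LC_del T G H|].
split; [apply/negP => H; move/negP: nLO; apply; exact: LO_del T G H|].
split; [apply/negP => H; move/negP: nIIZ; apply; exact: IIZ_del T G H|].
split; [apply/negP => H; move/negP: nCC; apply; exact: CC_del T nLO nIIZ G H|].
move=> f Hf.
have Hf' : is_edge col f.
  case/existsP: Hf => x /existsP[y /andP[Ef nN]]; apply/existsP; exists x; apply/existsP; exists y.
  rewrite Ef /=. move: nN; rewrite /del_edge; by case: ifP.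
apply: leq_trans (Hdeg f Hf').
apply: subset_leq_card; apply/subsetP => g; rewrite !inE => /orP[] h; apply/orP;
  [left|right]; exact: bp3_del T G h.
Qed.

Theorem proposition1 (V : finType) (col : V -> V -> option bool) (k : nat) :
  tcg col -> nice col ->
  forall e1 e2 : {set V}, bp3 col e1 e2 ->
  exists e : {set V}, (e = e1 \/ e = e2) /\
    nbp3 (del_edge col e) = nbp3 col - 1 /\
    nice (del_edge col e).
Proof.
move=> T N e1 e2 h12.
have h12' := h12.
case/existsP: h12' => u /existsP[v /existsP[w /existsP[c /and5P[/eqP E1 /eqP E2 uw
  /eqP h1 /andP[/eqP h2 /eqP h3]]]]].
case: (choice_p T N h1 h2 h3) => Gp.
- exists e1; split; [by left|].
  apply: (main_e T N h12 (or_introl erefl)); rewrite E1; exact: goodp_E Gp.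
- exists e2; split; [by right|].
  apply: (main_e T N h12 (or_intror erefl)); rewrite E2; exact: goodp_E Gp.
Qed.
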